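(* For the reduction instance $NTP([a_j]_{j\in A},W)$, the optimal value satisfies $B(S^* )=W$ if and only if there exists $A^*\subseteq A$ with $\sum_{j\in A^*}a_j=W$.
   Context: Reduction instance. Let $N\ge1$, $A=\{1,\dots,N\}$, positive integers $a_1,\dots,a_N$, positive integer $W\le\sum_{j\in A}a_j$. Set $M=N+\sum_{j\in A}a_j+1$, employees $\mathcal E=\{1,\dots,M\}$ (smaller index = more senior). For $k\in A$: $i_k=k+\sum_{j=1}^{k-1}a_j$ (critical employees), $\mathcal E^S_k=\{i: i_k<i\le i_k+a_k\}$ (stable block). Response delays: $r_{i_k}=\sum_{j=1}^{k}a_j$; for $i\in\mathcal E^S_k$, $r_i=\sum_{j=1}^{k-1}a_j$; $r_M=\sum_{j\in A}a_j$. Let $C^*_0=2\sum_j a_j$ and $H=C^*_0-W$. A schedule $S=(s_i,e_i)_{i\in\mathcal E}$ has $s_i\ge0$, $e_i=s_i+r_i$; it is feasible if $s_1\le\dots\le s_M$ and $e_i\le H$ for all $i$. $b_i=|\{j: i<j,\ e_j<e_i\}|$, $B(S)=\sum_i b_i$. $S^*$ denotes an optimal schedule, i.e. a feasible schedule minimizing $B(S)$. *)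

(* Defs.v *)
From mathcomp Require Import all_boot all_order all_algebra.
Set Implicit Arguments. Unset Strict Implicit. Unset Printing Implicit Defensive.
Import Order.TTheory GRing.Theory Num.Theory.

Section NTP.
Variable (N : nat) (a : nat -> nat) (W : nat).
(* Items are j = 1..N, with sizes a j; employees are i = 1..M. *)

Definition psum (k : nat) : nat := \sum_(1 <= j < k.+1) a j.
Definition total_size : nat := psum N.
Definition M : nat := N + total_size + 1.
Definition crit (k : nat) : nat := k + psum k.-1.
Definition in_stable (k i : nat) : bool := (crit k < i) && (i <= crit k + a k).

(* response delays r_i; the critical employees and stable blocks are
   pairwise disjoint and together with M cover 1..M, so exactly one
   summand (or the M-branch) contributes. *)
Definition delay (i : nat) : nat :=
  if i == M then total_size
  else \sum_(1 <= k < N.+1)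
         (if i == crit k then psum k
          else if in_stable k i then psum k.-1 else 0).

Definition H : nat := 2 * total_size - W.

Section Sched.
Variable R : realFieldType.
Local Open Scope ring_scope.

(* a schedule is given by its start times s_i (i = 1..M); e_i = s_i + r_i *)
Definition finish (s : nat -> R) (i : nat) : R := s i + (delay i)%:R.

Definition feasible (s : nat -> R) : Prop :=
  (forall i, (1 <= i <= M)%N -> 0 <= s i) /\
  (forall i, (1 <= i < M)%N -> s i <= s i.+1) /\
  (forall i, (1 <= i <= M)%N -> finish s i <= (H%:R : R)).

Definition bcount (s : nat -> R) (i : nat) : nat :=
  (\sum_(i.+1 <= j < M.+1) nat_of_bool (finish s j < finish s i)%R)%N.

Definition Bval (s : nat -> R) : nat := (\sum_(1 <= i < M.+1) bcount s i)%N.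

Definition optimal (s : nat -> R) : Prop :=
  feasible s /\ forall s', feasible s' -> (Bval s <= Bval s')%N.
End Sched.
End NTP.

(* Main.v *)
Require Import Defs.
From mathcomp Require Import all_boot all_order all_algebra zify ring lra.
Import Order.TTheory GRing.Theory Num.Theory.
Set Implicit Arguments. Unset Strict Implicit. Unset Printing Implicit Defensive.

Lemma sum0n m n (F : nat -> nat) : (forall i, m <= i < n -> F i = 0) -> \sum_(m<=i<n) F i = 0.
Proof. by move=> h; rewrite (eq_big_nat _ _ h) sum_nat_const_nat muln0. Qed.

Lemma sum_len m n (F G : nat -> nat) : (forall i, m <= i < n -> F i <= G i) ->
  \sum_(m<=i<n) F i <= \sum_(m<=i<n) G i.
Proof.
move=> h; rewrite big_nat_cond [X in _ <= X]big_nat_cond.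
by apply: leq_sum => i /andP[hi _]; exact: h.
Qed.

Section NatPart.
Variables (N : nat) (a : nat -> nat).

Lemma psum0 : psum a 0 = 0.
Proof. by rewrite /psum big_geq. Qed.

Lemma psumS k : psum a k.+1 = psum a k + a k.+1.
Proof. by rewrite /psum big_nat_recr. Qed.

Lemma psum_mono m n : m <= n -> psum a m <= psum a n.
Proof.
elim: n => [|n IH]; first by rewrite leqn0 => /eqP ->.
rewrite leq_eqVlt => /orP[/eqP -> //|]; rewrite ltnS => /IH h.
by rewrite psumS; apply: leq_trans h (leq_addr _ _).
Qed.

Lemma crit1 : crit a 1 = 1.
Proof. by rewrite /crit psum0. Qed.

Lemma critS k : 1 <= k -> crit a k.+1 = crit a k + a k + 1.
Proof.
case: k => // k _; rewrite /crit /= psumS; lia.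
Qed.

Lemma crit_mono k k' : k <= k' -> crit a k <= crit a k'.
Proof.
move=> h; rewrite /crit; have := @psum_mono k.-1 k'.-1 ltac:(lia); lia.
Qed.

Lemma crit_lt k k' : crit a k < crit a k' -> k < k'.
Proof. by move=> h; rewrite ltnNge; apply/negP => /crit_mono; lia. Qed.

Lemma critM : crit a N.+1 = M N a.
Proof. rewrite /crit /M /total_size /=; lia. Qed.

Lemma seg n j : 1 <= j < crit a n.+1 -> exists2 k, 1 <= k <= n & crit a k <= j < crit a k.+1.
Proof.
elim: n => [|n IH]; first by rewrite crit1; lia.
move=> hj; case: (ltnP j (crit a n.+1)) => h.
  by have [k hk hk'] := IH ltac:(lia); exists k => //; lia.
by exists n.+1 => //; lia.
Qed.

Lemma delay_seg k j : 1 <= k <= N -> crit a k <= j < crit a k.+1 ->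
  delay N a j = if j == crit a k then psum a k else psum a k.-1.
Proof.
move=> hk hj.
have hjM : j != M N a.
  have := @crit_mono k.+1 N.+1 ltac:(lia); rewrite critM; lia.
rewrite /delay (negbTE hjM).
rewrite (@big_cat_nat _ _ _ k) /=; [|lia|lia].
rewrite [X in _ + X](@big_cat_nat _ _ _ k.+1) /=; [|lia|lia].
rewrite big_nat1.
rewrite sum0n; last first.
  move=> k' hk'; have := @crit_mono k'.+1 k ltac:(lia); rewrite critS; last lia.
  move=> hc; rewrite /in_stable ifF; last lia. rewrite ifF //; lia.
rewrite [X in _ + (_ + X)]sum0n; last first.
  move=> k' hk'; have := @crit_mono k.+1 k' ltac:(lia).
  move=> hc; rewrite /in_stable ifF; last lia. rewrite ifF //; lia.
rewrite add0n addn0; case: eqP => // hne.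
rewrite /in_stable critS in hj; last lia.
by rewrite /in_stable ifT //; lia.
Qed.

Lemma delay_MM : delay N a (M N a) = total_size N a.
Proof. by rewrite /delay eqxx. Qed.

Lemma delay_ge k j : k <= N -> crit a k.+1 <= j <= M N a -> psum a k <= delay N a j.
Proof.
move=> hk hj; case: (eqVneq j (M N a)) => [->|hne].
  by rewrite delay_MM; apply: psum_mono.
have [k' hk' hs] := @seg N j ltac:(have := @crit_mono 1 k.+1 ltac:(lia); rewrite crit1 critM; lia).
have hkk : k.+1 < k'.+1 by apply: crit_lt; lia.
rewrite (@delay_seg k') //.
have := @psum_mono k k'.-1 ltac:(lia); have := @psum_mono k'.-1 k' ltac:(lia).
case: eqP; lia.
Qed.

Lemma delay_le j : 1 <= j <= M N a -> delay N a j <= total_size N a.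
Proof.
move=> hj; case: (eqVneq j (M N a)) => [->|hne]; first by rewrite delay_MM.
have [k' hk' hs] := @seg N j ltac:(rewrite critM; lia).
rewrite (@delay_seg k') //.
have := @psum_mono k' N ltac:(lia); have := @psum_mono k'.-1 k' ltac:(lia).
rewrite /total_size; case: eqP; lia.
Qed.

Lemma seg_sum n (f : nat -> nat) :
  \sum_(1 <= i < crit a n.+1) f i = \sum_(1 <= k < n.+1) \sum_(crit a k <= i < crit a k.+1) f i.
Proof.
elim: n => [|n IH]; first by rewrite crit1 !big_geq.
rewrite (@big_cat_nat _ _ _ (crit a n.+1)) /=; [|by rewrite -crit1; apply: crit_mono|by apply: crit_mono].
by rewrite IH [in RHS]big_nat_recr.
Qed.

End NatPart.

Lemma psumS' (a : nat -> nat) k : 1 <= k -> psum a k = psum a k.-1 + a k.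
Proof. by case: k => // k _; rewrite psumS. Qed.

Lemma delay_blk N a k j : 1 <= k <= N -> crit a k < j < crit a k.+1 -> delay N a j = psum a k.-1.
Proof.
move=> hk hj; rewrite (@delay_seg N a k j hk); last lia.
by rewrite ifF //; lia.
Qed.

Lemma delay_crit N a k : 1 <= k <= N -> delay N a (crit a k) = psum a k.
Proof.
move=> hk; rewrite (@delay_seg N a k _ hk) ?eqxx //.
rewrite critS; lia.
Qed.

Lemma delay_after N a k j : 1 <= k <= N -> crit a k < j <= M N a -> psum a k.-1 <= delay N a j.
Proof.
move=> hk hj; case: (ltnP j (crit a k.+1)) => h.
  by rewrite (@delay_blk N a k) //; lia.
have := @delay_ge N a k j ltac:(lia) ltac:(lia); have := @psum_mono a k.-1 k ltac:(lia); lia.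
Qed.

Section RPart.
Variables (N : nat) (a : nat -> nat) (W : nat) (R : realFieldType).
Hypothesis ha : forall j, 1 <= j <= N -> 0 < a j.
Local Open Scope ring_scope.

Lemma feas_mono (s : nat -> R) : feasible N a W s ->
  forall i j, (1 <= i)%N -> (i <= j)%N -> (j <= M N a)%N -> s i <= s j.
Proof.
move=> [_ [hm _]] i j h1; elim: j => [|j IH] hij hjM; first lia.
case: (eqVneq i j.+1) => [->//|hne].
apply: le_trans (IH _ _) (hm j _); lia.
Qed.

Lemma lower (s : nat -> R) : feasible N a W s -> (W <= total_size N a)%N ->
  let P := fun k => finish N a s (crit a k + a k) < finish N a s (crit a k) in
  (\sum_(1<=k<N.+1 | P k) a k <= Bval N a s)%N /\ (W <= \sum_(1<=k<N.+1 | P k) a k)%N.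
Proof.
move=> hf hW P; split.
  rewrite /Bval big_nat_recr /=; last by rewrite /M; lia.
  rewrite -critM (seg_sum a N (bcount N a s)).
  apply: leq_trans _ (leq_addr _ _).
  rewrite big_mkcond; apply: sum_len => k hk.
  rewrite big_ltn; last by rewrite critS; lia.
  apply: leq_trans _ (leq_addr _ _).
  case: ifP => hP //.
  have hcM : (crit a k.+1 <= M N a)%N by rewrite -critM; apply: crit_mono; lia.
  have hak := ha hk.
  rewrite /bcount (@big_cat_nat _ _ _ (crit a k.+1)) /=; [|by rewrite critS; lia|lia].
  apply: leq_trans _ (leq_addr _ _).
  have hlast : delay N a (crit a k + a k) = psum a k.-1.
    by rewrite (@delay_blk N a k) // critS; lia.
  rewrite (@eq_big_nat _ _ _ _ _ _ (fun=> 1%N)).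
    by rewrite sum_nat_const_nat critS; lia.
  move=> j hj.
  have dj : delay N a j = psum a k.-1.
    by rewrite (@delay_blk N a k) //; lia.
  have hsj := @feas_mono s hf j (crit a k + a k) ltac:(lia) ltac:(rewrite critS in hj; lia) ltac:(rewrite critS in hcM; lia).
  move: hP; rewrite /P /finish hlast dj => hP.
  suff -> : s j + (psum a k.-1)%:R < s (crit a k) + (delay N a (crit a k))%:R by [].
  lra.
have chain : forall n, (n <= N)%N ->
  s (crit a 1) + (\sum_(1<=k<n.+1) (if P k then 0 else a k))%:R <= s (crit a n.+1).
  elim=> [|n IH] hn; first by rewrite big_geq // addr0.
  rewrite big_nat_recr //= natrD addrA.
  have {}IH := IH ltac:(lia).
  have hcM : (crit a n.+2 <= M N a)%N by rewrite -critM; apply: crit_mono; lia.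
  have hak := @ha n.+1 ltac:(lia).
  have hc1 : (1 <= crit a n.+1)%N by rewrite /crit; lia.
  have hsl := @feas_mono s hf (crit a n.+1 + a n.+1) (crit a n.+2) ltac:(lia) ltac:(rewrite (@critS a n.+1); lia) hcM.
  have hsc := @feas_mono s hf (crit a n.+1) (crit a n.+1 + a n.+1) hc1 (leq_addr _ _) ltac:(rewrite (@critS a n.+1) in hcM; lia).
  case: ifP => hP; first by rewrite mulr0n addr0; lra.
  have {}hP : ~~ P n.+1 by rewrite hP.
  have hlast : delay N a (crit a n.+1 + a n.+1) = psum a n.
    by rewrite (@delay_blk N a n.+1) // (@critS a n.+1); lia.
  have hc : delay N a (crit a n.+1) = psum a n.+1.
    by rewrite (@delay_crit N a n.+1) //; lia.
  move: hP; rewrite /P /finish hlast hc psumS natrD -leNgt => hP.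
  lra.
have [_ [_ hfin]] := hf.
have [h0 _] := hf.
have hs1 := h0 1%N ltac:(rewrite /M; lia).
have hM := hfin (M N a) ltac:(rewrite /M; lia).
have hc := chain N (leqnn N).
rewrite (@critM N a) crit1 in hc.
move: hM; rewrite /finish delay_MM => hM.
set X := (\sum_(1<=k<N.+1) (if P k then 0 else a k))%N in hc.
have : ((X + total_size N a)%:R <= (H N a W)%:R :> R).
  rewrite natrD; lra.
rewrite ler_nat /H => hX.
have hT : total_size N a = (\sum_(1<=k<N.+1 | P k) a k + X)%N.
  rewrite /X /total_size /psum [in RHS]big_mkcond -big_split /=.
  by apply: eq_bigr => k _; case: (P k); rewrite ?addn0.
lia.
Qed.

End RPart.

Section Upper.
Variables (N : nat) (a : nat -> nat) (W : nat) (R : realFieldType).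
Hypothesis ha : forall j, 1 <= j <= N -> 0 < a j.
Variable P : pred nat.
Hypothesis hP : \sum_(1<=j<N.+1 | P j) a j = W.

Definition Dsh (i : nat) : nat := \sum_(1<=k<N.+1) (if ~~ P k && (crit a k < i) then a k else 0).
Definition s0 (i : nat) : R := (Dsh i)%:R.

Lemma Dsh_mono i j : i <= j -> Dsh i <= Dsh j.
Proof.
move=> hij; apply: sum_len => k hk.
case: (P k) => //=; case: (crit a k < i) /idP; case: (crit a k < j) /idP => //=; lia.
Qed.

Lemma tot_split : total_size N a = W + \sum_(1<=k<N.+1) (if ~~ P k then a k else 0).
Proof.
rewrite -hP /total_size /psum [in RHS]big_mkcond -big_split /=.
by apply: eq_bigr => k _; case: (P k); rewrite ?addn0.
Qed.

Lemma Dsh_le i : Dsh i <= total_size N a - W.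
Proof.
rewrite tot_split addKn; apply: sum_len => k _.
by case: (P k) => //=; case: ifP.
Qed.

Lemma Dsh_jump k j : 1 <= k <= N -> ~~ P k -> crit a k < j -> Dsh (crit a k) + a k <= Dsh j.
Proof.
move=> hk hPk hj; rewrite /Dsh.
have hin : k \in index_iota 1 N.+1 by rewrite mem_index_iota; lia.
have hu : uniq (index_iota 1 N.+1) by rewrite /index_iota iota_uniq.
rewrite !(bigD1_seq k hin hu) /= hPk ltnn hj /= add0n addnC leq_add2l.
apply: leq_sum => k' _.
case: (P k') => //=; case: (crit a k' < crit a k) /idP; case: (crit a k' < j) /idP => //=; lia.
Qed.

Lemma s0_feasible : (W <= total_size N a) -> feasible N a W s0.
Proof.
move=> hW; split; first by move=> i _; rewrite /s0 ler0n.
split; first by move=> i _; rewrite /s0 ler_nat; apply: Dsh_mono.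
move=> i hi; rewrite /finish /s0 -natrD ler_nat /H.
have := Dsh_le i; have := @delay_le N a i hi; lia.
Qed.

Lemma s0_B : Bval N a s0 <= W.
Proof.
rewrite /Bval big_nat_recr /=; last by rewrite /M; lia.
have -> : bcount N a s0 (M N a) = 0 by rewrite /bcount big_geq.
rewrite addn0.
rewrite -(@critM N a) (seg_sum a N (bcount N a s0)).
rewrite -hP [in X in _ <= X]big_mkcond; apply: sum_len => k hk.
have hcM : crit a k.+1 <= M N a by rewrite -critM; apply: crit_mono; lia.
have hak := ha hk.
have hcS := @critS a k ltac:(lia).
rewrite big_ltn; last lia.
rewrite sum0n; last first.
  move=> i hi; rewrite /bcount sum0n // => j hj.
  have di := @delay_blk N a k i hk ltac:(lia).
  have dj := @delay_after N a k j hk ltac:(lia).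
  have := @Dsh_mono i j ltac:(lia).
  rewrite /finish /s0 -!natrD ltr_nat.
  case: ltnP => //; lia.
rewrite addn0 /bcount (@big_cat_nat _ _ _ (crit a k.+1)) /=; [|lia|lia].
rewrite [X in _ + X <= _]sum0n; last first.
  move=> j hj.
  have dc := @delay_crit N a k hk.
  have dj := @delay_ge N a k j ltac:(lia) ltac:(lia).
  have := @Dsh_mono (crit a k) j ltac:(lia).
  rewrite /finish /s0 -!natrD ltr_nat.
  case: ltnP => //; lia.
rewrite addn0.
case: ifP => hPk.
  apply: (@leq_trans (\sum_((crit a k).+1 <= i < crit a k.+1) 1)).
    by apply: sum_len => j _; apply: leq_b1.
  by rewrite sum_nat_const_nat; lia.
rewrite sum0n // => j hj.
have dc := @delay_crit N a k hk.
have dj := @delay_blk N a k j hk ltac:(lia).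
have := @Dsh_jump k j hk ltac:(by rewrite hPk) ltac:(lia).
have := @psumS' a k ltac:(lia).
rewrite /finish /s0 -!natrD ltr_nat.
case: ltnP => //; lia.
Qed.

End Upper.

Theorem theorem2 (R : realFieldType) (N : nat) (a : nat -> nat) (W : nat)
  (hN : (1 <= N)%N)
  (ha : forall j, (1 <= j <= N)%N -> (0 < a j)%N)
  (hW0 : (0 < W)%N) (hW : (W <= total_size N a)%N)
  (s : nat -> R) (hopt : optimal N a W s) :
  Bval N a s = W <->
  exists P : pred nat, (\sum_(1 <= j < N.+1 | P j) a j)%N = W.
Proof.
have [hf hmin] := hopt.
have [h1 h2] := lower ha hf hW.
split.
  move=> hB; exists (fun k => finish N a s (crit a k + a k) < finish N a s (crit a k))%R; lia.
move=> [P hP].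
have hs0 := hmin _ (@s0_feasible N a W R P hP hW).
have := @s0_B N a W R ha P hP.
lia.
Qed.
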